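(* Let $1<p<\infty$, $q=\max\bigl(p,\tfrac{p}{p-1}\bigr)$ and $\delta=\frac{1}{2q}$. For $n\ge 1$ let \[ \mathcal{Z}(2n)=\{e^{2\pi i j/(2n+1)}\}_{j=0}^{n}\cup\{e^{-2\pi i (j-2\delta)/(2n+1)}\}_{j=1}^{n}=\{z_{(2n)k}\}_{k=0}^{2n}, \] and let $F_{2n}(z)=\prod_{k=0}^{2n}\bigl(1-\tfrac{2n}{2n+1}\overline{z_{(2n)k}}\,z\bigr)$. Let $I=\{e^{it}:0<t<\pi\}$ (so $|I|=\pi$). Then \[ \Bigl(\frac{1}{|I|}\int_{I}|F_{2n}(e^{i\theta})|^{p}\,d\theta\Bigr)^{1/p}\Bigl(\frac{1}{|I|}\int_{I}|F_{2n}(e^{i\theta})|^{-p/(p-1)}\,d\theta\Bigr)^{(p-1)/p}\longrightarrow\infty \quad (n\to\infty); \] in particular the weights $|F_{2n}|^p$ do not satisfy a uniform Muckenhoupt $(A_p)$ condition. (Each point of $\mathcal{Z}(2n)$, suitably indexed, satisfies $|\arg(z\,\overline{e^{2\pi i\delta/(2n+1)}\omega_{(2n)k}})|\le\frac{2\pi\delta}{2n+1}$, i.e. $\mathcal{Z}(2n)$ is an angular perturbation of size $\delta$ of the rotated $(2n+1)$th roots of unity.)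
   Context: $\omega_{mk}=e^{2\pi i k/(m+1)}$ denote the $(m+1)$th roots of unity. A family of nonnegative functions $w_n$ on the unit circle satisfies a uniform $(A_p)$ condition if there is $K$ with $\bigl(\frac{1}{|I|}\int_I w_n\bigr)^{1/p}\bigl(\frac{1}{|I|}\int_I w_n^{-1/(p-1)}\bigr)^{(p-1)/p}\le K$ for all subarcs $I$ and all $n$ (here applied with $w_n=|F_{2n}|^p$). *)

(* Defs.v *)
From Stdlib Require Import Reals Lra List.
Open Scope R_scope.

Definition qexp (p : R) : R := Rmax p (p / (p - 1)).
Definition delta (p : R) : R := 1 / (2 * qexp p).

(* Arguments of the points z_{(2n)k}, k = 0..2n:
   k = j in 0..n      : 2 pi j/(2n+1)
   k = n + j, j=1..n  : -2 pi (j - 2 delta)/(2n+1) *)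
Definition zarg (p : R) (n k : nat) : R :=
  if Nat.leb k n then 2 * PI * INR k / (2 * INR n + 1)
  else - (2 * PI * (INR (k - n) - 2 * delta p)) / (2 * INR n + 1).

Definition rad (n : nat) : R := 2 * INR n / (2 * INR n + 1).

(* |1 - r * conj(e^{i a}) * e^{i t}| = sqrt(1 - 2 r cos(t - a) + r^2) *)
Definition factor_abs (r a t : R) : R := sqrt (1 - 2 * r * cos (t - a) + r ^ 2).

Definition absF (p : R) (n : nat) (t : R) : R :=
  fold_right Rmult 1
    (map (fun k => factor_abs (rad n) (zarg p n k) t) (seq 0 (2 * n + 1))).

Definition wp (p : R) (n : nat) (t : R) : R := Rpower (absF p n t) p.
Definition wdual (p : R) (n : nat) (t : R) : R := Rpower (absF p n t) (- (p / (p - 1))).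

(* Main.v *)
Require Import Defs.
From Stdlib Require Import Reals Lra Lia List ZArith.
Open Scope R_scope.

Fixpoint sm (f : nat -> R) (m : nat) : R :=
  match m with O => 0 | S k => sm f k + f k end.

Lemma sm_ext f g m : (forall i, (i < m)%nat -> f i = g i) -> sm f m = sm g m.
Proof. induction m; intros H; simpl; auto. rewrite IHm, H; auto. Qed.

Lemma sm_le f g m : (forall i, (i < m)%nat -> f i <= g i) -> sm f m <= sm g m.
Proof. induction m; intros H; simpl; [lra|]. apply Rplus_le_compat; auto. Qed.

Lemma sm_plus f g m : sm (fun i => f i + g i) m = sm f m + sm g m.
Proof. induction m; simpl; [lra|]. rewrite IHm; ring. Qed.

Lemma sm_minus f g m : sm (fun i => f i - g i) m = sm f m - sm g m.
Proof. induction m; simpl; [lra|]. rewrite IHm; ring. Qed.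

Lemma sm_scal c f m : sm (fun i => c * f i) m = c * sm f m.
Proof. induction m; simpl; [lra|]. rewrite IHm; ring. Qed.

Lemma sm_shift f m : sm f (S m) = f O + sm (fun i => f (S i)) m.
Proof. induction m; simpl in *; [lra|]. rewrite IHm; ring. Qed.

Lemma sm_app f a b : sm f (a + b) = sm f a + sm (fun i => f (a + i)%nat) b.
Proof. induction b; simpl. rewrite Nat.add_0_r; ring. rewrite Nat.add_succ_r; simpl; rewrite IHb; ring. Qed.

Lemma sm_tele f m : sm (fun i => f i - f (S i)) m = f O - f m.
Proof. induction m; simpl; [lra|]. rewrite IHm; ring. Qed.

Lemma sm_const c m : sm (fun _ => c) m = INR m * c.
Proof. induction m; simpl sm; [simpl; lra|]. rewrite IHm, S_INR; ring. Qed.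

Lemma fold_exp (F psi : nat -> R) m : forall s, (forall k, F k = exp (psi k)) ->
  fold_right Rmult 1 (map F (seq s m)) = exp (sm (fun i => psi (s + i)%nat) m).
Proof.
  induction m; intros s H. simpl. rewrite exp_0; auto.
  cbn [seq map fold_right]. rewrite IHm by auto. rewrite (sm_shift (fun i => psi (s+i)%nat)).
  rewrite exp_plus, H, Nat.add_0_r. f_equal. f_equal. apply sm_ext; intros; f_equal; lia.
Qed.

Lemma sm_cont (F : nat -> R -> R) m : (forall i, continuity (F i)) ->
  continuity (fun t => sm (fun i => F i t) m).
Proof.
  intros H; induction m; simpl.
  - apply continuity_const; intros x y; auto.
  - apply (continuity_plus (fun t => sm (fun i => F i t) m) (F m)); auto.
Qed.

Definition Gf (r x : R) := 1 - 2 * r * cos x + r ^ 2.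
Definition gf (r x : R) := ln (Gf r x) / 2.
Definition gd (r x : R) := r * sin x / Gf r x.
Definition gdd (r x : R) := r * ((1 + r ^ 2) * cos x - 2 * r) / (Gf r x) ^ 2.

Lemma Gf_alt r x : Gf r x = (1 - r) ^ 2 + 2 * r * (1 - cos x).
Proof. unfold Gf; ring. Qed.

Lemma Gf_pos r x : 0 < r < 1 -> 0 < Gf r x.
Proof.
  intros Hr; rewrite Gf_alt. destruct (COS_bound x).
  assert (0 < (1 - r) ^ 2) by (apply pow_lt; lra). nra.
Qed.

Lemma Gf_le4 r x : 0 < r < 1 -> Gf r x <= 4.
Proof. intros Hr; unfold Gf; destruct (COS_bound x). nra. Qed.

Lemma Gf_ge1 r x : 0 < r < 1 -> cos x <= 0 -> 1 <= Gf r x.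
Proof. intros Hr Hc; unfold Gf. nra. Qed.

Lemma Gf_deriv r x : derivable_pt_lim (Gf r) x (2 * r * sin x).
Proof.
  assert (H := derivable_pt_lim_scal cos (-2 * r) x (- sin x) (derivable_pt_lim_cos x)).
  assert (H2 := derivable_pt_lim_plus (fct_cte (1 + r ^ 2)) _ x 0 _ (derivable_pt_lim_const (1 + r^2) x) H).
  replace (2 * r * sin x) with (0 + -2 * r * - sin x) by ring.
  eapply derivable_pt_lim_ext; [|exact H2].
  intros z; unfold Gf, plus_fct, mult_real_fct, fct_cte; ring.
Qed.

Lemma gf_deriv r x : 0 < r < 1 -> derivable_pt_lim (gf r) x (gd r x).
Proof.
  intros Hr.
  assert (Hp := Gf_pos r x Hr).
  assert (H1 := derivable_pt_lim_ln _ Hp).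
  assert (H2 : derivable_pt_lim (fun y => ln y * / 2) (Gf r x) (/ Gf r x * / 2)).
  { apply (derivable_pt_lim_scal_right ln). exact H1. }
  assert (H3 := derivable_pt_lim_comp _ _ x _ _ (Gf_deriv r x) H2).
  replace (gd r x) with (/ Gf r x * / 2 * (2 * r * sin x)).
  2:{ unfold gd; field; lra. }
  eapply derivable_pt_lim_ext; [|exact H3].
  intros z; unfold gf, comp; lra.
Qed.

Lemma gd_deriv r x : 0 < r < 1 -> derivable_pt_lim (gd r) x (gdd r x).
Proof.
  intros Hr. assert (Hp := Gf_pos r x Hr).
  assert (Hs : derivable_pt_lim (fun y => r * sin y) x (r * cos x)).
  { apply (derivable_pt_lim_scal sin r x (cos x)). apply derivable_pt_lim_sin. }
  assert (H := derivable_pt_lim_div _ _ x _ _ Hs (Gf_deriv r x) ltac:(lra)).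
  replace (gdd r x) with ((r * cos x * Gf r x - 2 * r * sin x * (r * sin x)) / (Gf r x)²).
  - eapply derivable_pt_lim_ext; [|exact H]. intros z; unfold gd, div_fct; reflexivity.
  - unfold gdd, Rsqr. assert (Hsc := sin2_cos2 x). unfold Rsqr in Hsc.
    field_simplify; [|lra|lra]. f_equal. unfold Gf. nra.
Qed.

Lemma gd_mono r lo hi a b : 0 < r < 1 ->
  (forall x, lo <= x <= hi -> (1 + r ^ 2) * cos x <= 2 * r) ->
  lo <= a -> a <= b -> b <= hi -> gd r b <= gd r a.
Proof.
  intros Hr Hreg H1 H2 H3. destruct (Req_dec a b) as [->|Hne]; [lra|].
  destruct (MVT_cor2 (gd r) (gdd r) a b ltac:(lra)) as [c [Hc1 Hc2]].
  { intros; apply gd_deriv; auto. }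
  assert (gdd r c <= 0).
  { unfold gdd. assert (Hp := Gf_pos r c Hr). assert (Hc := Hreg c ltac:(lra)).
    apply Rmult_le_reg_r with (Gf r c ^ 2). apply pow_lt; lra.
    unfold Rdiv; rewrite Rmult_assoc, Rinv_l, Rmult_0_l. nra. apply pow_nonzero; lra. }
  nra.
Qed.

Lemma gf_mvt r a b : 0 < r < 1 -> a < b ->
  exists c, gf r b - gf r a = gd r c * (b - a) /\ a < c < b.
Proof. intros Hr Hab. apply MVT_cor2; auto. intros; apply gf_deriv; auto. Qed.

Lemma chord_lower r lo hi e h x : 0 < r < 1 ->
  (forall y, lo <= y <= hi -> (1 + r ^ 2) * cos y <= 2 * r) ->
  0 < e < h -> lo <= x - h -> x <= hi ->
  e / h * (gf r (x - h) - gf r x) <= gf r (x - e) - gf r x.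
Proof.
  intros Hr Hreg He H1 H2.
  destruct (gf_mvt r (x-h) (x-e) Hr ltac:(lra)) as [eta [E1 Heta]].
  destruct (gf_mvt r (x-e) x Hr ltac:(lra)) as [xi [E2 Hxi]].
  assert (Hm : gd r xi <= gd r eta) by (apply (gd_mono r lo hi); auto; lra).
  assert (Hid : gf r (x - e) - gf r x - e / h * (gf r (x - h) - gf r x)
     = e / h * (h - e) * (gd r eta - gd r xi)).
  { replace (gf r (x - h)) with (gf r (x - e) - gd r eta * (x - e - (x - h))) by lra.
    replace (gf r x) with (gf r (x - e) + gd r xi * (x - (x - e))) by lra.
    field. lra. }
  assert (0 <= e / h * (h - e) * (gd r eta - gd r xi)).
  { apply Rmult_le_pos; [|lra]. apply Rmult_le_pos; [|lra].
    unfold Rdiv; apply Rmult_le_pos; [lra|]. left; apply Rinv_0_lt_compat; lra. }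
  lra.
Qed.

Lemma chord_upper r lo hi e h x : 0 < r < 1 ->
  (forall y, lo <= y <= hi -> (1 + r ^ 2) * cos y <= 2 * r) ->
  0 < e -> 0 < h -> lo <= x - e -> x + h <= hi ->
  gf r (x - e) - gf r x <= e / h * (gf r x - gf r (x + h)).
Proof.
  intros Hr Hreg He Hh H1 H2.
  destruct (gf_mvt r (x-e) x Hr ltac:(lra)) as [xi [E1 Hxi]].
  destruct (gf_mvt r x (x+h) Hr ltac:(lra)) as [eta [E2 Heta]].
  assert (Hm : gd r eta <= gd r xi) by (apply (gd_mono r lo hi); auto; lra).
  assert (Hid : e / h * (gf r x - gf r (x + h)) - (gf r (x - e) - gf r x)
     = e * (gd r xi - gd r eta)).
  { replace (gf r (x + h)) with (gf r x + gd r eta * (x + h - x)) by lra.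
    replace (gf r (x - e)) with (gf r x - gd r xi * (x - (x - e))) by lra.
    field. lra. }
  assert (0 <= e * (gd r xi - gd r eta)) by (apply Rmult_le_pos; lra).
  lra.
Qed.

Definition NN n := 2 * INR n + 1.
Definition hh n := 2 * PI / NN n.
Definition th p := 2 * delta p.
Definition ee p n := th p * hh n.
Definition pc p := p / (p - 1).

Lemma PI_gt3 : 3 < PI.
Proof. assert (H := PI2_3_2). lra. Qed.

Lemma NN_ge3 n : (1 <= n)%nat -> 3 <= NN n.
Proof. intros H; unfold NN. apply le_INR in H. simpl in H. lra. Qed.

Lemma hh_pos n : (1 <= n)%nat -> 0 < hh n.
Proof. intros H; unfold hh. assert (Hn := NN_ge3 n H). assert (HP := PI_gt3).
  apply Rdiv_lt_0_compat; lra. Qed.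

Lemma hh_NN n : (1 <= n)%nat -> hh n * NN n = 2 * PI.
Proof. intros H; unfold hh. assert (Hn := NN_ge3 n H). field. lra. Qed.

Lemma nh_eq n : (1 <= n)%nat -> INR n * hh n = PI - hh n / 2.
Proof. intros H; assert (E := hh_NN n H). unfold NN in E. lra. Qed.

Lemma hh_le n : (1 <= n)%nat -> hh n <= 2 * PI / 3.
Proof. intros H; assert (E := hh_NN n H). assert (Hn := NN_ge3 n H). assert (Hh := hh_pos n H).
  assert (HP := PI_gt3). nra. Qed.

Lemma hh_le2 n : (2 <= n)%nat -> hh n <= 2 * PI / 5.
Proof. intros H; assert (H1 : (1 <= n)%nat) by lia. assert (E := hh_NN n H1).
  apply le_INR in H. simpl in H. unfold NN in E. assert (Hh := hh_pos n H1).
  assert (HP := PI_gt3). nra. Qed.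

Lemma rad_eq n : (1 <= n)%nat -> rad n = 1 - 1 / NN n.
Proof. intros H; unfold rad. assert (Hn := NN_ge3 n H). unfold NN in *. field. lra. Qed.

Lemma rad_bounds n : (1 <= n)%nat -> 0 < rad n < 1.
Proof. intros H; rewrite rad_eq by auto. assert (Hn := NN_ge3 n H).
  assert (0 < 1 / NN n <= 1/3). { split. apply Rdiv_lt_0_compat; lra.
    apply Rmult_le_reg_r with (NN n); [lra|]. field_simplify; lra. }
  lra. Qed.

Lemma one_minus_rad n : (1 <= n)%nat -> 1 - rad n <= hh n / 2.
Proof. intros H; rewrite rad_eq by auto. unfold hh. assert (Hn := NN_ge3 n H).
  assert (HP := PI_gt3). unfold Rdiv.
  replace (1 - (1 - 1 * / NN n)) with (/ NN n) by ring.
  replace (2 * PI * / NN n * / 2) with (PI * / NN n) by (field; lra).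
  assert (0 < / NN n) by (apply Rinv_0_lt_compat; lra). nra. Qed.

Lemma qexp_ge p : 1 < p -> p <= qexp p /\ pc p <= qexp p /\ (qexp p = p \/ qexp p = pc p).
Proof. intros Hp. unfold qexp, pc. split; [apply Rmax_l|split;[apply Rmax_r|]].
  apply Rmax_case; auto. Qed.

Lemma pc_gt1 p : 1 < p -> 1 < pc p.
Proof. intros Hp; unfold pc. apply Rmult_lt_reg_r with (p - 1); [lra|].
  unfold Rdiv; rewrite Rmult_assoc, Rinv_l; lra. Qed.

Lemma pc_rel p : 1 < p -> p + pc p = p * pc p.
Proof. intros Hp; unfold pc. field. lra. Qed.

Lemma th_eq p : 1 < p -> th p = 1 / qexp p.
Proof. intros Hp; unfold th, delta. assert (H := qexp_ge p Hp). field. lra. Qed.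

Lemma qexp_ge2 p : 1 < p -> 2 <= qexp p.
Proof. intros Hp. destruct (qexp_ge p Hp) as [H1 [H2 _]]. assert (E := pc_rel p Hp).
  assert (H3 := pc_gt1 p Hp). destruct (Rle_lt_dec 2 p); [lra|].
  assert (2 <= pc p). { unfold pc. apply Rmult_le_reg_r with (p - 1); [lra|].
   unfold Rdiv; rewrite Rmult_assoc, Rinv_l; lra. } lra. Qed.

Lemma th_bounds p : 1 < p -> 0 < th p <= 1/2.
Proof. intros Hp; rewrite th_eq by auto. assert (H := qexp_ge2 p Hp). split.
  apply Rdiv_lt_0_compat; lra. apply Rmult_le_reg_r with (qexp p); [lra|].
  field_simplify; lra. Qed.

Lemma alpha_le p : 1 < p -> th p * p <= 1.
Proof. intros Hp; rewrite th_eq by auto. destruct (qexp_ge p Hp) as [H1 _].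
  assert (H := qexp_ge2 p Hp). apply Rmult_le_reg_r with (qexp p); [lra|].
  field_simplify; lra. Qed.

Lemma beta_le p : 1 < p -> th p * pc p <= 1.
Proof. intros Hp; rewrite th_eq by auto. destruct (qexp_ge p Hp) as [_ [H1 _]].
  assert (H := qexp_ge2 p Hp). apply Rmult_le_reg_r with (qexp p); [lra|].
  field_simplify; lra. Qed.

Lemma ab_one p : 1 < p -> th p * p = 1 \/ th p * pc p = 1.
Proof. intros Hp; rewrite th_eq by auto. destruct (qexp_ge p Hp) as [_ [_ [E|E]]];
  assert (H := qexp_ge2 p Hp); [left|right]; rewrite E; rewrite E in H; field; lra. Qed.

Definition UU n t := sm (fun k => gf (rad n) (t - INR k * hh n)) (n+1)
   + sm (fun i => gf (rad n) (t + INR (S i) * hh n)) n.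
Definition DD p n t := sm (fun i => gf (rad n) (t + INR (S i) * hh n - ee p n)
   - gf (rad n) (t + INR (S i) * hh n)) n.

Lemma sqrt_exp x : 0 < x -> sqrt x = exp (ln x / 2).
Proof. intros H. rewrite <- (sqrt_square (exp (ln x / 2))) by (left; apply exp_pos).
  f_equal. rewrite <- exp_plus. replace (ln x / 2 + ln x / 2) with (ln x) by field.
  symmetry; apply exp_ln; auto. Qed.

Lemma absF_eq p n t : (1 <= n)%nat -> absF p n t = exp (UU n t + DD p n t).
Proof.
  intros Hn. assert (Hr := rad_bounds n Hn). assert (HN := NN_ge3 n Hn).
  unfold absF.
  rewrite (fold_exp _ (fun k => gf (rad n) (t - zarg p n k))).
  2:{ intros k. unfold factor_abs. rewrite sqrt_exp by (apply (Gf_pos _ _ Hr)). reflexivity. }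
  f_equal. replace (2 * n + 1)%nat with ((n + 1) + n)%nat by lia.
  rewrite sm_app. unfold UU, DD. rewrite sm_minus.
  assert (E1 : sm (fun i => gf (rad n) (t - zarg p n (0 + i))) (n + 1)
             = sm (fun k => gf (rad n) (t - INR k * hh n)) (n + 1)).
  { apply sm_ext; intros i Hi. rewrite Nat.add_0_l. unfold zarg.
    replace (Nat.leb i n) with true by (symmetry; apply Nat.leb_le; lia).
    f_equal. unfold hh, NN. unfold NN in HN. field. lra. }
  assert (E2 : sm (fun i => gf (rad n) (t - zarg p n (0 + (n + 1 + i)))) n
             = sm (fun i => gf (rad n) (t + INR (S i) * hh n - ee p n)) n).
  { apply sm_ext; intros i Hi. rewrite Nat.add_0_l. unfold zarg.
    replace (Nat.leb (n + 1 + i) n) with false by (symmetry; apply Nat.leb_gt; lia).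
    replace (n + 1 + i - n)%nat with (S i) by lia.
    f_equal. unfold ee, th, hh, NN. unfold NN in HN. field. lra. }
  rewrite E1, E2. ring.
Qed.

Lemma gf_per r x : gf r (x + 2 * PI) = gf r x.
Proof. unfold gf, Gf. rewrite cos_plus, cos_2PI, sin_2PI. f_equal; f_equal; ring. Qed.

Lemma gf_neg r x : gf r (- x) = gf r x.
Proof. unfold gf, Gf. rewrite cos_neg. auto. Qed.

Lemma UU_per n t : (1 <= n)%nat -> UU n (t + hh n) = UU n t.
Proof.
  intros Hn. unfold UU. set (h := hh n). set (r := rad n).
  replace (n + 1)%nat with (S n) by lia.
  rewrite (sm_shift (fun k => gf r (t + h - INR k * h))).
  assert (E1 : sm (fun i => gf r (t + h - INR (S i) * h)) n = sm (fun k => gf r (t - INR k * h)) n).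
  { apply sm_ext; intros; f_equal. rewrite S_INR; ring. }
  rewrite E1. simpl (sm (fun k => gf r (t - INR k * h)) (S n)).
  set (phi := fun j => gf r (t + INR j * h)).
  assert (E2 : sm (fun i => gf r (t + h + INR (S i) * h)) n = sm (fun i => phi (S (S i))) n).
  { apply sm_ext; intros; unfold phi; f_equal. rewrite !S_INR; ring. }
  rewrite E2.
  assert (E3 : sm (fun i => gf r (t + INR (S i) * h)) n = sm (fun i => phi (S i)) n) by reflexivity.
  rewrite E3.
  assert (E4 := sm_shift (fun i => phi (S i)) n). simpl in E4.
  assert (E5 : phi (S n) = gf r (t - INR n * h)).
  { unfold phi. rewrite <- (gf_per r (t - INR n * h)). f_equal.
    assert (E := hh_NN n Hn). fold h in E. unfold NN in E. rewrite S_INR. lra. }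
  replace (gf r (t + h - INR 0 * h)) with (phi 1%nat) by (unfold phi; f_equal; simpl; ring).
  lra.
Qed.

Lemma UU_perk n t k : (1 <= n)%nat -> UU n (t + INR k * hh n) = UU n t.
Proof.
  intros Hn. induction k. simpl; f_equal; ring.
  rewrite S_INR. replace (t + (INR k + 1) * hh n) with ((t + INR k * hh n) + hh n) by ring.
  rewrite UU_per; auto.
Qed.

Lemma cos_le_half n y : (1 <= n)%nat -> hh n / 2 <= y <= 2 * PI - hh n / 2 ->
  cos y <= cos (hh n / 2).
Proof.
  intros Hn Hy. assert (Hh := hh_pos n Hn). assert (Hh2 := hh_le n Hn). assert (HP := PI_gt3).
  destruct (Rle_lt_dec y PI).
  - destruct (Req_dec y (hh n / 2)) as [->|]; [lra|].
    left; apply cos_decreasing_1; lra.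
  - replace (cos y) with (cos (2 * PI - y)).
    2:{ replace (2 * PI - y) with (- y + 2 * PI) by ring. rewrite cos_plus, cos_2PI, sin_2PI, cos_neg. ring. }
    destruct (Req_dec (2 * PI - y) (hh n / 2)) as [->|]; [lra|].
    left; apply cos_decreasing_1; lra.
Qed.

Lemma region n y : (1 <= n)%nat -> hh n / 2 <= y <= 2 * PI - hh n / 2 ->
  (1 + rad n ^ 2) * cos y <= 2 * rad n.
Proof.
  intros Hn Hy. assert (Hc := cos_le_half n y Hn Hy).
  assert (Hh := hh_pos n Hn). assert (HP := PI_gt3). assert (HP4 := PI_4).
  assert (HN := NN_ge3 n Hn).
  set (a := hh n / 2) in *.
  assert (Ha : a = PI / NN n) by (unfold a, hh; field; lra).
  set (u := 1 / NN n).
  assert (Hr : rad n = 1 - u) by (rewrite rad_eq; auto).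
  assert (Hu : 0 < u <= 1/3). { unfold u; split. apply Rdiv_lt_0_compat; lra.
    apply Rmult_le_reg_r with (NN n); [lra|]. field_simplify; lra. }
  assert (Hau : 3 * u <= a). { rewrite Ha. unfold u. unfold Rdiv. rewrite Rmult_1_l.
    apply Rmult_le_compat_r; [left; apply Rinv_0_lt_compat; lra | lra]. }
  assert (Ha43 : a <= 4 / 3). { rewrite Ha. apply Rmult_le_reg_r with (NN n); [lra|].
    unfold Rdiv; rewrite Rmult_assoc, Rinv_l; nra. }
  assert (Hcb : cos a <= 1 - a ^ 2 / 2 + a ^ 4 / 24).
  { destruct (cos_bound a 0 ltac:(lra) ltac:(lra)) as [_ Hb].
    replace (cos_approx a (2 * (0 + 1))) with (1 - a ^ 2 / 2 + a ^ 4 / 24) in Hb; [exact Hb|].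
    unfold cos_approx, cos_term. simpl. field. }
  assert (Hc2 : cos y <= 1 - 36 / 10 * u ^ 2).
  { assert (a ^ 4 / 24 <= a ^ 2 * (16/9) / 24). { replace (a^4) with (a^2 * a^2) by ring.
      assert (a ^ 2 <= 16/9) by nra. assert (0 <= a^2) by nra. nra. }
    assert (9 * u ^ 2 <= a ^ 2) by nra. nra. }
  rewrite Hr. assert (0 <= 1 + (1 - u) ^ 2) by nra.
  assert ((1 + (1 - u) ^ 2) * cos y <= (1 + (1 - u) ^ 2) * (1 - 36 / 10 * u ^ 2)).
  { apply Rmult_le_compat_l; auto. }
  nra.
Qed.

Lemma ee_h p n : 1 < p -> (1 <= n)%nat -> ee p n / hh n = th p /\ 0 < ee p n <= hh n / 2.
Proof. intros Hp Hn. assert (Hh := hh_pos n Hn). assert (Ht := th_bounds p Hp).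
  unfold ee. split. field; lra. split. apply Rmult_lt_0_compat; lra. nra. Qed.

Lemma DD_lower p n t : 1 < p -> (1 <= n)%nat -> PI / 2 <= t <= PI ->
  th p * (gf (rad n) t - gf (rad n) (t + INR n * hh n)) <= DD p n t.
Proof.
  intros Hp Hn Ht. destruct (ee_h p n Hp Hn) as [Eh He].
  assert (Hh := hh_pos n Hn). assert (Hh2 := hh_le n Hn). assert (HP := PI_gt3).
  assert (Enh := nh_eq n Hn). assert (Hr := rad_bounds n Hn).
  unfold DD. set (h := hh n) in *. set (r := rad n) in *. set (e := ee p n) in *.
  apply Rle_trans with (sm (fun i => e / h * (gf r (t + INR i * h) - gf r (t + INR (S i) * h))) n).
  - rewrite sm_scal. rewrite (sm_tele (fun j => gf r (t + INR j * h))). rewrite Eh.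
    simpl (INR 0). replace (t + 0 * h) with t by ring. lra.
  - apply sm_le; intros i Hi.
    replace (t + INR i * h) with (t + INR (S i) * h - h) by (rewrite S_INR; ring).
    apply (chord_lower r (h/2) (2 * PI - h/2)); auto.
    + intros y Hy; apply region; auto.
    + lra.
    + assert (0 <= INR i) by apply pos_INR. rewrite S_INR. nra.
    + assert (INR (S i) <= INR n) by (apply le_INR; lia). nra.
Qed.

Lemma DD_upper p n t : 1 < p -> (2 <= n)%nat -> 0 <= t <= PI / 2 ->
  DD p n t <= th p * (gf (rad n) (t + hh n) - gf (rad n) (t + INR (S n) * hh n)).
Proof.
  intros Hp Hn2 Ht. assert (Hn : (1 <= n)%nat) by lia. destruct (ee_h p n Hp Hn) as [Eh He].
  assert (Hh := hh_pos n Hn). assert (Hh2 := hh_le2 n Hn2). assert (HP := PI_gt3).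
  assert (Enh := nh_eq n Hn). assert (Hr := rad_bounds n Hn).
  unfold DD. set (h := hh n) in *. set (r := rad n) in *. set (e := ee p n) in *.
  apply Rle_trans with (sm (fun i => e / h * (gf r (t + INR (S i) * h) - gf r (t + INR (S (S i)) * h))) n).
  - apply sm_le; intros i Hi.
    replace (t + INR (S (S i)) * h) with (t + INR (S i) * h + h) by (rewrite (S_INR (S i)); ring).
    apply (chord_upper r (h/2) (2 * PI - h/2)); auto.
    + intros y Hy; apply region; auto.
    + lra.
    + assert (0 <= INR i) by apply pos_INR. rewrite S_INR. nra.
    + assert (INR (S i) <= INR n) by (apply le_INR; lia).
      assert (INR (S i) * h <= INR n * h) by (apply Rmult_le_compat_r; lra). nra.
  - rewrite sm_scal. rewrite (sm_tele (fun j => gf r (t + INR (S j) * h))). rewrite Eh.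
    simpl (INR 1). replace (t + 1 * h) with (t + h) by ring. lra.
Qed.

Lemma ln_le' x y : 0 < x -> x <= y -> ln x <= ln y.
Proof. intros H1 H2. destruct H2 as [H2| ->]; [left; apply ln_increasing; auto|lra]. Qed.

Lemma gf_nonneg r x : 0 < r < 1 -> cos x <= 0 -> 0 <= gf r x.
Proof. intros Hr Hc. unfold gf. assert (H := Gf_ge1 r x Hr Hc).
  assert (ln 1 <= ln (Gf r x)) by (apply ln_le'; lra). rewrite ln_1 in H0. lra. Qed.

Lemma gf_small r y w : 0 < r < 1 -> 0 <= y <= PI / 2 -> 1 - r <= w -> y <= w ->
  gf r y <= ln w + ln 2 / 2.
Proof.
  intros Hr Hy H1 H2. assert (HP := PI_gt3).
  assert (Hc : 1 - y ^ 2 / 2 <= cos y).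
  { destruct (cos_bound y 0 ltac:(lra) ltac:(lra)) as [Hb _].
    replace (cos_approx y (2 * 0 + 1)) with (1 - y ^ 2 / 2) in Hb; [exact Hb|].
    unfold cos_approx, cos_term. simpl. field. }
  assert (Hc1 := COS_bound y).
  assert (HG : Gf r y <= 2 * w ^ 2). { rewrite Gf_alt. nra. }
  assert (Hw : 0 < w) by lra.
  unfold gf. assert (ln (Gf r y) <= ln (2 * w ^ 2)) by (apply ln_le'; [apply Gf_pos; auto| auto]).
  rewrite ln_mult, ln_pow in H by (try apply pow_lt; lra). simpl (INR 2) in H. lra.
Qed.

Definition cst (g : R) (i : nat) (h : R) := exp (- g * (ln ((INR i + 2) * h) + ln 2 / 2)).

Lemma right_block p n i t : 1 < p -> (1 <= n)%nat -> (1 <= i)%nat ->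
  (INR i + 3) * hh n <= PI / 2 ->
  PI - (INR i + 1/2) * hh n <= t <= PI - (INR i - 1/2) * hh n ->
  cst (th p * p) i (hh n) <= exp (p * DD p n t).
Proof.
  intros Hp Hn Hi Hib Ht. unfold cst.
  assert (Hh := hh_pos n Hn). assert (HP := PI_gt3). assert (Enh := nh_eq n Hn).
  assert (Hr := rad_bounds n Hn). assert (H1r := one_minus_rad n Hn).
  assert (HI : 1 <= INR i) by (apply le_INR in Hi; simpl in Hi; lra).
  assert (Htp : PI / 2 <= t <= PI) by nra.
  assert (HD := DD_lower p n t Hp Hn Htp).
  assert (Hg0 : 0 <= gf (rad n) t) by (apply gf_nonneg; auto; apply cos_le_0; lra).
  assert (Hg1 : gf (rad n) (t + INR n * hh n) <= ln ((INR i + 2) * hh n) + ln 2 / 2).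
  { replace (t + INR n * hh n) with (- (PI - t + hh n / 2) + 2 * PI) by lra.
    rewrite gf_per, gf_neg. apply gf_small; auto; nra. }
  assert (Hth := th_bounds p Hp).
  set (X := ln ((INR i + 2) * hh n) + ln 2 / 2) in *.
  assert (H0 : - th p * X <= DD p n t).
  { apply Rle_trans with (th p * (gf (rad n) t - gf (rad n) (t + INR n * hh n))); auto.
    replace (- th p * X) with (th p * (- X)) by ring. apply Rmult_le_compat_l; lra. }
  assert (H : - (th p * p) * X <= p * DD p n t).
  { replace (- (th p * p) * X) with (p * (- th p * X)) by ring. apply Rmult_le_compat_l; lra. } destruct H as [H'|H']. left; apply exp_increasing; auto. rewrite H'; lra.
Qed.

Lemma left_block p n i t : 1 < p -> (2 <= n)%nat ->
  (INR i + 3) * hh n <= PI / 2 ->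
  INR i * hh n <= t <= (INR i + 1) * hh n ->
  cst (th p * pc p) i (hh n) <= exp (- pc p * DD p n t).
Proof.
  intros Hp Hn2 Hib Ht. assert (Hn : (1 <= n)%nat) by lia. unfold cst.
  assert (Hh := hh_pos n Hn). assert (HP := PI_gt3). assert (Enh := nh_eq n Hn).
  assert (Hr := rad_bounds n Hn). assert (H1r := one_minus_rad n Hn).
  assert (HI : 0 <= INR i) by apply pos_INR.
  assert (Htp : 0 <= t <= PI / 2) by nra.
  assert (HD := DD_upper p n t Hp Hn2 Htp).
  assert (Hg0 : 0 <= gf (rad n) (t + INR (S n) * hh n)).
  { apply gf_nonneg; auto. rewrite S_INR.
    replace (t + (INR n + 1) * hh n) with ((t + hh n / 2) + PI) by lra.
    rewrite neg_cos. assert (0 <= cos (t + hh n / 2)) by (apply cos_ge_0; nra). lra. }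
  set (X := ln ((INR i + 2) * hh n) + ln 2 / 2) in *.
  assert (Hg1 : gf (rad n) (t + hh n) <= X) by (apply gf_small; auto; nra).
  assert (Hth := th_bounds p Hp). assert (Hpc := pc_gt1 p Hp).
  assert (H0 : DD p n t <= th p * X).
  { apply Rle_trans with (th p * (gf (rad n) (t + hh n) - gf (rad n) (t + INR (S n) * hh n))); auto.
    apply Rmult_le_compat_l; lra. }
  assert (H : - (th p * pc p) * X <= - pc p * DD p n t).
  { replace (- (th p * pc p) * X) with (- pc p * (th p * X)) by ring.
    apply Rmult_le_compat_neg_l; lra. }
  destruct H as [H'|H']. left; apply exp_increasing; auto. rewrite H'; lra.
Qed.

Definition cint (f : R -> R) (Hf : continuity f) (a b : R) : R :=
  match Rle_dec a b with
  | left H => RiemannInt (@continuity_implies_RiemannInt f a b H (fun x _ => Hf x))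
  | right _ => 0 end.

Lemma cint_eq f Hf a b (pr : Riemann_integrable f a b) : a <= b -> RiemannInt pr = cint f Hf a b.
Proof. intros H. unfold cint. destruct (Rle_dec a b); [apply RiemannInt_P5|lra]. Qed.

Lemma cint_pr f (Hf : continuity f) a b : a <= b -> Riemann_integrable f a b.
Proof. intros H. exact (@continuity_implies_RiemannInt f a b H (fun x _ => Hf x)). Qed.

Lemma cint_irr f Hf1 Hf2 a b : cint f Hf1 a b = cint f Hf2 a b.
Proof. unfold cint. destruct (Rle_dec a b); auto. apply RiemannInt_P5. Qed.

Lemma cint_ext f g Hf Hg a b : a <= b -> (forall x, a <= x <= b -> f x = g x) -> cint f Hf a b = cint g Hg a b.
Proof. intros H E. rewrite <- (cint_eq f Hf a b (cint_pr f Hf a b H)) by auto.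
  rewrite <- (cint_eq g Hg a b (cint_pr g Hg a b H)) by auto.
  apply RiemannInt_P18; auto. intros; apply E; lra. Qed.

Lemma cint_chasles f Hf a b c : a <= b -> b <= c -> cint f Hf a b + cint f Hf b c = cint f Hf a c.
Proof. intros H1 H2.
  rewrite <- (cint_eq f Hf a b (cint_pr f Hf a b H1)) by auto.
  rewrite <- (cint_eq f Hf b c (cint_pr f Hf b c H2)) by auto.
  rewrite <- (cint_eq f Hf a c (cint_pr f Hf a c ltac:(lra))) by lra.
  apply RiemannInt_P26. Qed.

Lemma cint_mono f g Hf Hg a b : a <= b -> (forall x, a <= x <= b -> f x <= g x) -> cint f Hf a b <= cint g Hg a b.
Proof. intros H E. rewrite <- (cint_eq f Hf a b (cint_pr f Hf a b H)) by auto.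
  rewrite <- (cint_eq g Hg a b (cint_pr g Hg a b H)) by auto.
  apply RiemannInt_P19; auto. intros; apply E; lra. Qed.

Lemma cint_const c Hf a b : a <= b -> cint (fun _ => c) Hf a b = c * (b - a).
Proof. intros H. rewrite <- (cint_eq _ Hf a b (RiemannInt_P14 a b c)) by auto.
  apply RiemannInt_P15. Qed.

Lemma cint_lb f Hf a b c : a <= b -> (forall x, a <= x <= b -> c <= f x) -> c * (b - a) <= cint f Hf a b.
Proof. intros H E. assert (Hc : continuity (fun _ : R => c)) by (apply continuity_const; intros ? ?; auto).
  rewrite <- (cint_const c Hc a b H). apply cint_mono; auto. Qed.

Lemma cint_nonneg f Hf a b : a <= b -> (forall x, a <= x <= b -> 0 <= f x) -> 0 <= cint f Hf a b.
Proof. intros H E. assert (H0 := cint_lb f Hf a b 0 H E). lra. Qed.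

Lemma cint_lin f g Hf Hg l (Hfg : continuity (fun x => f x + l * g x)) a b : a <= b ->
  cint (fun x => f x + l * g x) Hfg a b = cint f Hf a b + l * cint g Hg a b.
Proof. intros H.
  rewrite <- (cint_eq f Hf a b (cint_pr f Hf a b H)) by auto.
  rewrite <- (cint_eq g Hg a b (cint_pr g Hg a b H)) by auto.
  rewrite <- (cint_eq _ Hfg a b (cint_pr _ Hfg a b H)) by auto.
  apply RiemannInt_P13. Qed.

Lemma cint_scal f Hf c (Hcf : continuity (fun x => c * f x)) a b : a <= b -> cint (fun x => c * f x) Hcf a b = c * cint f Hf a b.
Proof. intros H. assert (H0 : continuity (fun _ : R => 0)) by (apply continuity_const; intros ? ?; auto).
  assert (Hl : continuity (fun x => 0 + c * f x)).
  { apply (continuity_plus (fun _ => 0) (fun x => c * f x)); auto. }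
  rewrite (cint_ext _ (fun x => 0 + c * f x) Hcf Hl a b H) by (intros; ring).
  rewrite (cint_lin _ _ H0 Hf c Hl a b H). rewrite cint_const; auto. ring. Qed.

Lemma cint_blocks f Hf a h M : 0 <= h ->
  cint f Hf a (a + INR M * h) = sm (fun i => cint f Hf (a + INR i * h) (a + INR i * h + h)) M.
Proof. intros Hh. induction M.
  - simpl. replace (a + 0 * h) with a by ring.
    assert (E := cint_chasles f Hf a a a (Rle_refl a) (Rle_refl a)). lra.
  - simpl sm. rewrite <- IHM. rewrite S_INR.
    replace (a + (INR M + 1) * h) with (a + INR M * h + h) by ring.
    symmetry; apply cint_chasles. assert (0 <= INR M) by apply pos_INR. nra. lra.
Qed.

Lemma cint_period f Hf h k : 0 < h -> (forall x, f (x + h) = f x) ->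
  cint f Hf (INR k * h) (INR k * h + h) = cint f Hf 0 h.
Proof.
  intros Hh Hper.
  assert (Hk : 0 <= INR k) by apply pos_INR.
  set (B := INR k * h + h + 1).
  assert (HB : 0 <= B) by (unfold B; nra).
  set (C0 := fun (x : R) (_ : 0 <= x <= B) => Hf x).
  set (P := primitive HB (FTC_P1 HB C0)).
  assert (HP : forall x, 0 <= x <= B -> P x = cint f Hf 0 x).
  { intros x Hx. unfold P, primitive. destruct (Rle_dec 0 x); [|lra].
    destruct (Rle_dec x B); [|lra]. apply cint_eq; lra. }
  assert (HD : forall x, 0 <= x <= B -> derivable_pt_lim P x (f x)).
  { intros x Hx. apply (@RiemannInt_P28 f 0 B x HB C0 Hx). }
  set (Q := fun a => P (a + h) - P a).
  assert (HQ : forall a, 0 <= a -> a + h <= B -> Q a = cint f Hf a (a + h)).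
  { intros a H1 H2. unfold Q. rewrite !HP by lra.
    rewrite <- (cint_chasles f Hf 0 a (a + h)) by lra. ring. }
  destruct (Req_dec (INR k * h) 0) as [E|E].
  { rewrite E. f_equal; ring. }
  assert (Hkh : 0 < INR k * h) by nra.
  destruct (MVT_cor2 Q (fun a => f (a + h) * 1 - f a) 0 (INR k * h) Hkh) as [c [Hc1 Hc2]].
  { intros c Hc. unfold Q. apply (derivable_pt_lim_minus (fun a => P (a + h)) P).
    - assert (H1 : derivable_pt_lim (fun a => a + h) c 1).
      { assert (H := derivable_pt_lim_plus id (fct_cte h) c 1 0 (derivable_pt_lim_id c) (derivable_pt_lim_const h c)).
        replace 1 with (1 + 0) by ring. eapply derivable_pt_lim_ext; [|exact H]. intros; reflexivity. }
      apply (derivable_pt_lim_comp (fun a => a + h) P c 1 (f (c + h)) H1). apply HD. unfold B; lra.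
    - apply HD. unfold B; lra. }
  rewrite Hper in Hc1.
  rewrite <- (HQ (INR k * h)) by (unfold B; lra).
  replace (cint f Hf 0 h) with (cint f Hf 0 (0 + h)) by (f_equal; ring).
  rewrite <- (HQ 0) by (unfold B; lra). lra.
Qed.

Lemma ln_mono x y : 0 < x -> x <= y -> ln x <= ln y.
Proof. intros H1 H2. destruct H2 as [H2| ->]; [left; apply ln_increasing; auto|lra]. Qed.

Lemma cont_exp : continuity exp.
Proof. apply derivable_continuous, derivable_exp. Qed.

Lemma cont_expc U c : continuity U -> continuity (fun t => exp (c * U t)).
Proof. intros H. apply (continuity_comp (fun t => c * U t) exp); [|apply cont_exp].
  apply (continuity_scal U c H). Qed.

Lemma exp_ge1 z : 1 + z <= exp z.
Proof. destruct (Req_dec z 0) as [->|H]. rewrite exp_0; lra. left; apply exp_ineq1; auto. Qed.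

Lemma exp_convex th u v : 0 <= th <= 1 ->
  exp (th * u + (1 - th) * v) <= th * exp u + (1 - th) * exp v.
Proof.
  intros Ht. set (m := th * u + (1 - th) * v).
  assert (E1 : exp u = exp m * exp (u - m)) by (rewrite <- exp_plus; f_equal; ring).
  assert (E2 : exp v = exp m * exp (v - m)) by (rewrite <- exp_plus; f_equal; ring).
  assert (H1 := exp_ge1 (u - m)). assert (H2 := exp_ge1 (v - m)).
  assert (Hm := exp_pos m). rewrite E1, E2.
  assert (exp m * (1 + (u - m)) <= exp m * exp (u - m)) by (apply Rmult_le_compat_l; lra).
  assert (exp m * (1 + (v - m)) <= exp m * exp (v - m)) by (apply Rmult_le_compat_l; lra).
  assert (th * (exp m * (1 + (u - m))) + (1 - th) * (exp m * (1 + (v - m))) = exp m)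
    by (unfold m; ring).
  nra.
Qed.

Lemma holder_period U (HU : continuity U) p q h m M : 1 < p -> 1/p + 1/q = 1 -> 0 < q -> 0 < h ->
  (forall t, m <= U t <= M) ->
  ln h <= 1/p * ln (cint (fun t => exp (p * U t)) (cont_expc U p HU) 0 h)
        + 1/q * ln (cint (fun t => exp (- q * U t)) (cont_expc U (-q) HU) 0 h).
Proof.
  intros Hp Hpq Hq Hh Hb.
  set (F1 := cint (fun t => exp (p * U t)) (cont_expc U p HU) 0 h).
  set (F2 := cint (fun t => exp (- q * U t)) (cont_expc U (-q) HU) 0 h).
  assert (P1 : 0 < F1). { apply Rlt_le_trans with (exp (p * m) * (h - 0)).
    apply Rmult_lt_0_compat; [apply exp_pos|lra].
    apply cint_lb; [lra|]. intros x _. destruct (Hb x).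
    destruct (Rle_lt_or_eq_dec _ _ H) as [Hl|He]. left; apply exp_increasing; nra. rewrite He; lra. }
  assert (P2 : 0 < F2). { apply Rlt_le_trans with (exp (- q * M) * (h - 0)).
    apply Rmult_lt_0_compat; [apply exp_pos|lra].
    apply cint_lb; [lra|]. intros x _. destruct (Hb x).
    destruct (Rle_lt_or_eq_dec _ _ H0) as [Hl|He]. left; apply exp_increasing; nra. rewrite He; lra. }
  set (a := ln F1). set (b := ln F2).
  set (K := exp (- a / p - b / q)).
  assert (Hc1 : continuity (fun t => exp (- q * U t))) by apply cont_expc, HU.
  assert (Hs1 : continuity (fun t => / q * exp (-b) * exp (- q * U t))).
  { apply (continuity_scal (fun t => exp (- q * U t)) (/ q * exp (-b))); auto. }
  assert (Hs0 : continuity (fun t => / p * exp (-a) * exp (p * U t))).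
  { apply (continuity_scal (fun t => exp (p * U t)) (/ p * exp (-a))); apply cont_expc, HU. }
  assert (Hsum : continuity (fun t => / p * exp (-a) * exp (p * U t) + 1 * (/ q * exp (-b) * exp (- q * U t)))).
  { apply (continuity_plus (fun t => / p * exp (-a) * exp (p * U t)) (fun t => 1 * (/ q * exp (-b) * exp (- q * U t)))); auto.
    apply (continuity_scal (fun t => / q * exp (-b) * exp (- q * U t)) 1); auto. }
  assert (Hint : K * (h - 0) <= cint _ Hsum 0 h).
  { apply cint_lb; [lra|]. intros t _. unfold K.
    assert (Hth : 0 <= 1/p <= 1). { split. left; apply Rdiv_lt_0_compat; lra.
      assert (0 < 1/q) by (apply Rdiv_lt_0_compat; lra). lra. }
    assert (H := exp_convex (1/p) (p * U t - a) (- q * U t - b) Hth).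
    replace (1 / p * (p * U t - a) + (1 - 1 / p) * (- q * U t - b)) with (- a / p - b / q) in H.
    2:{ replace (1 - 1/p) with (1/q) by lra. field_simplify; lra. }
    replace (1 - 1/p) with (1/q) in H by lra.
    try replace (exp (p * U t + - a)) with (exp (p * U t) * exp (-a)) in H by (rewrite <- exp_plus; f_equal; ring).
    replace (exp (- q * U t - b)) with (exp (- q * U t) * exp (-b)) in H by (rewrite <- exp_plus; f_equal; ring).
    replace (exp (p * U t - a)) with (exp (p * U t) * exp (-a)) in H by (rewrite <- exp_plus; f_equal; ring).
    unfold Rdiv in H. lra. }
  rewrite (cint_lin _ _ Hs0 Hs1 1 Hsum 0 h) in Hint by lra.
  rewrite (cint_scal _ (cont_expc U p HU) (/ p * exp (- a)) Hs0 0 h) in Hint by lra.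
  rewrite (cint_scal _ (cont_expc U (-q) HU) (/ q * exp (- b)) Hs1 0 h) in Hint by lra.
  fold F1 F2 in Hint.
  assert (EA : exp (- a) * F1 = 1). { unfold a. rewrite exp_Ropp, exp_ln; auto. field; lra. }
  assert (EB : exp (- b) * F2 = 1). { unfold b. rewrite exp_Ropp, exp_ln; auto. field; lra. }
  replace (/ p * exp (- a) * F1 + 1 * (/ q * exp (- b) * F2)) with (1/p + 1/q) in Hint.
  2:{ transitivity (/p * (exp (-a) * F1) + /q * (exp (-b) * F2)); [rewrite EA, EB; field; lra| ring]. }
  rewrite Hpq in Hint.
  assert (HK : ln (K * h) <= 0). { rewrite <- ln_1. apply ln_mono. apply Rmult_lt_0_compat; [apply exp_pos|lra]. lra. }
  rewrite ln_mult in HK by (try apply exp_pos; lra). unfold K in HK. rewrite ln_exp in HK.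
  unfold Rdiv in HK. lra.
Qed.

Lemma cint_sub f Hf a b c d : a <= c -> c <= d -> d <= b -> (forall x, 0 <= f x) ->
  cint f Hf c d <= cint f Hf a b.
Proof. intros H1 H2 H3 Hp.
  rewrite <- (cint_chasles f Hf a c b) by lra. rewrite <- (cint_chasles f Hf c d b) by lra.
  assert (0 <= cint f Hf a c) by (apply cint_nonneg; auto).
  assert (0 <= cint f Hf d b) by (apply cint_nonneg; auto). lra. Qed.

Lemma sm_rev f m : sm f m = sm (fun j => f (m - 1 - j)%nat) m.
Proof. induction m. reflexivity.
  rewrite (sm_shift (fun j => f (S m - 1 - j)%nat)). change (sm f (S m)) with (sm f m + f m). rewrite IHm.
  replace (f (S m - 1 - 0)%nat) with (f m) by (f_equal; lia).
  rewrite Rplus_comm. f_equal. apply sm_ext; intros; f_equal; lia. Qed.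

Definition LL p n t := UU n t + DD p n t.

Lemma gf_cont r : 0 < r < 1 -> continuity (gf r).
Proof. intros Hr x. apply derivable_continuous_pt. exists (gd r x). apply gf_deriv; auto. Qed.

Lemma shift_cont f c : continuity f -> continuity (fun t => f (t + c)).
Proof. intros H. apply (continuity_comp (fun t => t + c) f); auto.
  apply (continuity_plus id (fct_cte c)). apply derivable_continuous, derivable_id.
  apply continuity_const; intros ? ?; auto. Qed.

Lemma UU_cont n : (1 <= n)%nat -> continuity (UU n).
Proof. intros Hn. assert (Hr := rad_bounds n Hn). unfold UU.
  apply (continuity_plus (fun t => sm (fun k => gf (rad n) (t - INR k * hh n)) (n + 1))
     (fun t => sm (fun i => gf (rad n) (t + INR (S i) * hh n)) n)).
  - apply (sm_cont (fun k t => gf (rad n) (t - INR k * hh n))). intros i.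
    apply (shift_cont (gf (rad n)) (- (INR i * hh n))), gf_cont; auto.
  - apply (sm_cont (fun k t => gf (rad n) (t + INR (S k) * hh n))). intros i.
    apply shift_cont, gf_cont; auto. Qed.

Lemma DD_cont p n : (1 <= n)%nat -> continuity (DD p n).
Proof. intros Hn. assert (Hr := rad_bounds n Hn). unfold DD.
  apply (sm_cont (fun i t => gf (rad n) (t + INR (S i) * hh n - ee p n) - gf (rad n) (t + INR (S i) * hh n))).
  intros i. apply (continuity_minus (fun t => gf (rad n) (t + INR (S i) * hh n - ee p n))
     (fun t => gf (rad n) (t + INR (S i) * hh n))).
  - assert (H := shift_cont (gf (rad n)) (INR (S i) * hh n - ee p n) (gf_cont _ Hr)).
    intros x; specialize (H x). apply (continuity_pt_locally_ext (fun t => gf (rad n) (t + (INR (S i) * hh n - ee p n))) (fun t => gf (rad n) (t + INR (S i) * hh n - ee p n)) 1 x Rlt_0_1); [|exact H]. intros; simpl; f_equal; ring.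
  - apply shift_cont, gf_cont; auto. Qed.

Lemma LL_cont p n : (1 <= n)%nat -> continuity (LL p n).
Proof. intros Hn. unfold LL. apply (continuity_plus (UU n) (DD p n)); [apply UU_cont|apply DD_cont]; auto. Qed.

Lemma gf_lb r x : 0 < r < 1 -> ln (1 - r) <= gf r x.
Proof. intros Hr. unfold gf. rewrite Gf_alt. destruct (COS_bound x).
  assert (ln ((1 - r) ^ 2) <= ln ((1 - r) ^ 2 + 2 * r * (1 - cos x))).
  { apply ln_mono. apply pow_lt; lra. nra. }
  rewrite ln_pow in H1 by lra. simpl (INR 2) in H1. lra. Qed.

Lemma gf_ub r x : 0 < r < 1 -> gf r x <= ln 2.
Proof. intros Hr. unfold gf. assert (H := Gf_le4 r x Hr). assert (HP := Gf_pos r x Hr).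
  assert (ln (Gf r x) <= ln (2 ^ 2)) by (apply ln_mono; auto; simpl; lra).
  rewrite ln_pow in H0 by lra. simpl (INR 2) in H0. lra. Qed.

Lemma UU_bounds n : (1 <= n)%nat -> forall t,
  INR (n + 1 + n) * ln (1 - rad n) <= UU n t <= INR (n + 1 + n) * ln 2.
Proof. intros Hn t. assert (Hr := rad_bounds n Hn). unfold UU. rewrite plus_INR. split.
  - rewrite Rmult_plus_distr_r, <- !sm_const. apply Rplus_le_compat; apply sm_le; intros; apply gf_lb; auto.
  - rewrite Rmult_plus_distr_r, <- !sm_const. apply Rplus_le_compat; apply sm_le; intros; apply gf_ub; auto.
Qed.

Lemma I1_lb p n M (HL : continuity (fun t => exp (p * LL p n t)))
  (HU : continuity (fun t => exp (p * UU n t))) : 1 < p -> (2 <= n)%nat -> (1 <= M)%nat -> (M <= n)%nat ->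
  (INR M + 3) * hh n <= PI / 2 ->
  sm (fun i => cst (th p * p) (S i) (hh n)) M * cint _ HU 0 (hh n) <= cint _ HL 0 PI.
Proof.
  intros Hp Hn2 HM HMn Hc. assert (Hn : (1 <= n)%nat) by lia.
  assert (Hh := hh_pos n Hn). assert (Enh := nh_eq n Hn). assert (HP := PI_gt3).
  set (h := hh n) in *. set (a := INR (n - M) * h).
  assert (Ea : a + INR M * h = INR n * h) by (unfold a; rewrite minus_INR by lia; ring).
  assert (Ha : 0 <= a) by (unfold a; apply Rmult_le_pos; [apply pos_INR|lra]).
  assert (HMp : 0 <= INR M) by apply pos_INR.
  apply Rle_trans with (cint _ HL a (a + INR M * h)).
  2:{ apply cint_sub; try nra. intros; left; apply exp_pos. }
  rewrite cint_blocks by lra.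
  rewrite (sm_rev (fun i => cst (th p * p) (S i) h)). rewrite Rmult_comm, <- sm_scal.
  apply sm_le; intros j Hj. rewrite (Rmult_comm (cint _ HU 0 h)).
  assert (Ek : a + INR j * h = INR (n - M + j) * h) by (unfold a; rewrite plus_INR; ring).
  rewrite Ek.
  rewrite <- (cint_period _ HU h (n - M + j)) by (auto; intros; f_equal; f_equal; apply UU_per; auto).
  set (c := cst (th p * p) (S (M - 1 - j)) h).
  assert (HcU : continuity (fun t => c * exp (p * UU n t))).
  { apply (continuity_scal (fun t => exp (p * UU n t)) c HU). }
  rewrite <- (cint_scal _ HU c HcU) by lra.
  assert (Hkh : 0 <= INR (n - M + j) * h) by (apply Rmult_le_pos; [apply pos_INR|lra]).
  apply cint_mono; [lra|]. intros t Ht.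
  unfold LL. rewrite Rmult_plus_distr_l, exp_plus. rewrite Rmult_comm.
  apply Rmult_le_compat_l; [left; apply exp_pos|].
  unfold c. replace (S (M - 1 - j)) with (M - j)%nat by lia.
  apply right_block; auto; try lia.
  - fold h. assert (INR (M - j) <= INR M) by (apply le_INR; lia). nra.
  - fold h. rewrite minus_INR by lia. rewrite plus_INR, minus_INR in Ht by lia. nra.
Qed.

Lemma I2_lb p n M (HL : continuity (fun t => exp (- pc p * LL p n t)))
  (HU : continuity (fun t => exp (- pc p * UU n t))) : 1 < p -> (2 <= n)%nat -> (1 <= M)%nat ->
  (INR M + 3) * hh n <= PI / 2 ->
  sm (fun i => cst (th p * pc p) (S i) (hh n)) M * cint _ HU 0 (hh n) <= cint _ HL 0 PI.
Proof.
  intros Hp Hn2 HM Hc. assert (Hn : (1 <= n)%nat) by lia.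
  assert (Hh := hh_pos n Hn). assert (HP := PI_gt3).
  set (h := hh n) in *.
  assert (HMp : 0 <= INR M) by apply pos_INR.
  apply Rle_trans with (cint _ HL h (h + INR M * h)).
  2:{ apply cint_sub; try nra. intros; left; apply exp_pos. }
  rewrite cint_blocks by lra.
  rewrite Rmult_comm, <- sm_scal.
  apply sm_le; intros j Hj. rewrite (Rmult_comm (cint _ HU 0 h)).
  assert (Ek : h + INR j * h = INR (S j) * h) by (rewrite S_INR; ring).
  rewrite Ek.
  rewrite <- (cint_period _ HU h (S j)) by (auto; intros; f_equal; f_equal; apply UU_per; auto).
  set (c := cst (th p * pc p) (S j) h).
  assert (HcU : continuity (fun t => c * exp (- pc p * UU n t))).
  { apply (continuity_scal (fun t => exp (- pc p * UU n t)) c HU). }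
  rewrite <- (cint_scal _ HU c HcU) by lra.
  assert (Hkh : 0 <= INR (S j) * h) by (apply Rmult_le_pos; [apply pos_INR|lra]).
  apply cint_mono; [lra|]. intros t Ht.
  unfold LL. rewrite Rmult_plus_distr_l, exp_plus. rewrite Rmult_comm.
  apply Rmult_le_compat_l; [left; apply exp_pos|].
  unfold c. apply left_block; auto.
  - fold h. assert (INR (S j) <= INR M) by (apply le_INR; lia). nra.
  - fold h. lra.
Qed.

Lemma sm_S f m : sm f (S m) = sm f m + f m.
Proof. reflexivity. Qed.

Lemma ln2_pos : 0 < ln 2.
Proof. rewrite <- ln_1. apply ln_increasing; lra. Qed.

Lemma cst_ge g i h : 0 < g <= 1 -> 0 < h -> (INR i + 2) * h <= PI / 2 -> / 4 <= cst g i h.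
Proof.
  intros Hg Hh Hb. unfold cst. assert (HP := PI_4). assert (Hl := ln2_pos).
  assert (Hi : 0 <= INR i) by apply pos_INR.
  assert (HX : ln ((INR i + 2) * h) <= ln 2) by (apply ln_mono; nra).
  set (X := ln ((INR i + 2) * h) + ln 2 / 2).
  assert (E4 : exp (- (2 * ln 2)) = / 4).
  { rewrite exp_Ropp. f_equal. replace (2 * ln 2) with (ln 2 + ln 2) by ring.
    rewrite exp_plus, exp_ln; lra. }
  rewrite <- E4. destruct (Rle_lt_dec X 0).
  - assert (- (2 * ln 2) <= - g * X) by nra. destruct H as [H| ->]; [left; apply exp_increasing; auto|lra].
  - assert (- (2 * ln 2) <= - g * X) by (unfold X in *; nra).
    destruct H as [H| ->]; [left; apply exp_increasing; auto|lra].
Qed.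

Lemma cst_one i h : 0 < h -> cst 1 i h = exp (- (ln 2 / 2)) * / ((INR i + 2) * h).
Proof. intros Hh. unfold cst. assert (Hi : 0 <= INR i) by apply pos_INR.
  transitivity (exp (- (ln 2 / 2) + - ln ((INR i + 2) * h))). f_equal; ring.
  rewrite exp_plus. rewrite (exp_Ropp (ln ((INR i + 2) * h))), exp_ln; auto. apply Rmult_lt_0_compat; lra. Qed.

Lemma ln1px x : 0 <= x -> ln (1 + x) <= x.
Proof. intros H. rewrite <- (ln_exp x) at 2. apply ln_mono; [lra|]. apply exp_ge1. Qed.

Lemma harm M : ln (INR M + 3) - ln 3 <= sm (fun i => / (INR (S i) + 2)) M.
Proof.
  induction M. simpl. replace (0 + 3) with 3 by ring. lra.
  rewrite sm_S. rewrite S_INR.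
  assert (Hm : 0 <= INR M) by apply pos_INR.
  assert (ln (INR M + 1 + 3) - ln (INR M + 3) <= / (INR M + 1 + 2)).
  { replace (INR M + 1 + 3) with ((INR M + 3) * (1 + / (INR M + 3))) by (field; lra).
    assert (0 < / (INR M + 3)) by (apply Rinv_0_lt_compat; lra).
    rewrite ln_mult by lra.
    assert (ln (1 + / (INR M + 3)) <= / (INR M + 3)) by (apply ln1px; left; apply Rinv_0_lt_compat; lra).
    replace (INR M + 1 + 2) with (INR M + 3) by ring. lra. }
  lra.
Qed.

Definition C0 := ln PI + ln 4 + ln 2.

Lemma alg_final a b h M Hs F1 F2 Sa Sb I1 I2 :
  0 < a < 1 -> b = 1 - a -> 0 < h -> 1 <= h * M -> 0 < F1 -> 0 < F2 ->
  ln h <= a * ln F1 + b * ln F2 -> Sa * F1 <= I1 -> Sb * F2 <= I2 ->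
  M / 4 <= Sa -> M / 4 <= Sb -> 1 <= Hs ->
  (Sa = exp (- (ln 2 / 2)) * / h * Hs \/ Sb = exp (- (ln 2 / 2)) * / h * Hs) ->
  - C0 + Rmin a b * ln Hs <= a * ln (/ PI * I1) + b * ln (/ PI * I2).
Proof.
  intros Ha Hb Hh HhM HF1 HF2 Hhol HI1 HI2 HSa HSb HHs Hcase.
  assert (HP := PI_gt3). assert (Hl2 := ln2_pos).
  assert (HM : 0 < M) by (apply Rmult_lt_reg_l with h; nra).
  assert (HSa0 : 0 < Sa) by lra. assert (HSb0 : 0 < Sb) by lra.
  assert (Hpi : 0 < / PI) by (apply Rinv_0_lt_compat; lra).
  assert (L1 : ln (/ PI) + ln Sa + ln F1 <= ln (/ PI * I1)).
  { rewrite <- !ln_mult by (try apply Rmult_lt_0_compat; lra).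
    apply ln_mono. repeat apply Rmult_lt_0_compat; lra. rewrite Rmult_assoc. apply Rmult_le_compat_l; lra. }
  assert (L2 : ln (/ PI) + ln Sb + ln F2 <= ln (/ PI * I2)).
  { rewrite <- !ln_mult by (try apply Rmult_lt_0_compat; lra).
    apply ln_mono. repeat apply Rmult_lt_0_compat; lra. rewrite Rmult_assoc. apply Rmult_le_compat_l; lra. }
  rewrite ln_Rinv in L1, L2 by lra.
  assert (Hln : ln Hs >= 0). { rewrite <- ln_1. destruct HHs as [H| <-]; [left; apply ln_increasing; lra|lra]. }
  assert (HhM' : 0 <= ln h + ln M). { rewrite <- ln_mult by lra. rewrite <- ln_1. apply ln_mono; lra. }
  assert (HM4a : ln M - ln 4 <= ln Sa). { unfold Rminus. rewrite <- ln_Rinv by lra. rewrite <- ln_mult by (try apply Rinv_0_lt_compat; lra).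
    apply ln_mono. apply Rmult_lt_0_compat; [lra|apply Rinv_0_lt_compat; lra]. lra. }
  assert (HM4b : ln M - ln 4 <= ln Sb). { unfold Rminus. rewrite <- ln_Rinv by lra. rewrite <- ln_mult by (try apply Rinv_0_lt_compat; lra).
    apply ln_mono. apply Rmult_lt_0_compat; [lra|apply Rinv_0_lt_compat; lra]. lra. }
  assert (Hc : forall S, S = exp (- (ln 2 / 2)) * / h * Hs -> ln S = - (ln 2 / 2) - ln h + ln Hs).
  { intros S ->. rewrite !ln_mult; try (apply Rmult_lt_0_compat); try apply exp_pos;
      try (apply Rinv_0_lt_compat); try lra.
    rewrite ln_exp, ln_Rinv by lra. ring. }
  assert (Hln4 : 0 < ln 4). { rewrite <- ln_1. apply ln_increasing; lra. }
  assert (Hlnpi : 0 < ln PI). { rewrite <- ln_1. apply ln_increasing; lra. }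
  assert (Hmin1 := Rmin_l a b). assert (Hmin2 := Rmin_r a b).
  assert (Hmin0 : 0 < Rmin a b) by (apply Rmin_case; lra).
  assert (Hk : Rmin a b * ln Hs <= a * ln Hs /\ Rmin a b * ln Hs <= b * ln Hs) by (split; nra).
  unfold C0. destruct Hcase as [E|E]; apply Hc in E.
  -
    assert (a * ln (/ PI * I1) + b * ln (/ PI * I2) >=
       a * (- ln PI + ln Sa + ln F1) + b * (- ln PI + ln Sb + ln F2)) by nra.
    rewrite E in H. nra.
  - assert (a * ln (/ PI * I1) + b * ln (/ PI * I2) >=
       a * (- ln PI + ln Sa + ln F1) + b * (- ln PI + ln Sb + ln F2)) by nra.
    rewrite E in H. nra.
Qed.

Definition Hs M := sm (fun i => / (INR (S i) + 2)) M.

Lemma Sg_ge g n M : 0 < g <= 1 -> (1 <= n)%nat -> (INR M + 3) * hh n <= PI / 2 ->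
  INR M / 4 <= sm (fun i => cst g (S i) (hh n)) M.
Proof. intros Hg Hn Hc. assert (Hh := hh_pos n Hn).
  unfold Rdiv. rewrite <- sm_const. apply sm_le. intros i Hi. apply cst_ge; auto.
  assert (INR (S i) <= INR M) by (apply le_INR; lia). nra. Qed.

Lemma S1_eq n M : (1 <= n)%nat ->
  sm (fun i => cst 1 (S i) (hh n)) M = exp (- (ln 2 / 2)) * / hh n * Hs M.
Proof. intros Hn. assert (Hh := hh_pos n Hn). unfold Hs. rewrite <- sm_scal.
  apply sm_ext; intros i Hi. rewrite cst_one by auto.
  assert (0 <= INR (S i)) by apply pos_INR. field. split; lra. Qed.

Lemma En_bound p n M (HL1 : continuity (fun t => exp (p * LL p n t)))
  (HL2 : continuity (fun t => exp (- pc p * LL p n t))) :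
  1 < p -> (2 <= n)%nat -> (1 <= M)%nat -> (M <= n)%nat -> (INR M + 3) * hh n <= PI / 2 ->
  1 <= hh n * INR M -> 1 <= Hs M ->
  - C0 + Rmin (1 / p) ((p - 1) / p) * ln (Hs M) <=
  1 / p * ln (/ PI * cint _ HL1 0 PI) + (p - 1) / p * ln (/ PI * cint _ HL2 0 PI).
Proof.
  intros Hp Hn2 HM HMn Hc HhM HHs. assert (Hn : (1 <= n)%nat) by lia.
  assert (Hh := hh_pos n Hn). assert (HU := UU_cont n Hn).
  assert (Hpc := pc_gt1 p Hp). assert (Epc : 1 / pc p = (p - 1) / p) by (unfold pc; field; lra).
  assert (Hsum : 1 / p + 1 / pc p = 1) by (rewrite Epc; field; lra).
  destruct (UU_bounds n Hn 0) as [_ _].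
  assert (Hhol := holder_period (UU n) HU p (pc p) (hh n) _ _ Hp Hsum ltac:(lra) Hh (UU_bounds n Hn)).
  rewrite Epc in Hhol.
  set (F1 := cint (fun t => exp (p * UU n t)) (cont_expc (UU n) p HU) 0 (hh n)) in *.
  set (F2 := cint (fun t => exp (- pc p * UU n t)) (cont_expc (UU n) (- pc p) HU) 0 (hh n)) in *.
  assert (Hm : forall t, INR (n + 1 + n) * ln (1 - rad n) <= UU n t <= INR (n + 1 + n) * ln 2) by (apply UU_bounds; auto).
  assert (HF1 : 0 < F1).
  { apply Rlt_le_trans with (exp (p * (INR (n + 1 + n) * ln (1 - rad n))) * (hh n - 0)).
    apply Rmult_lt_0_compat; [apply exp_pos|lra]. apply cint_lb; [lra|]. intros x _.
    destruct (Hm x) as [H1 _]. assert (p * (INR (n + 1 + n) * ln (1 - rad n)) <= p * UU n x) by (apply Rmult_le_compat_l; lra).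
    destruct H as [H| ->]; [left; apply exp_increasing; auto|lra]. }
  assert (HF2 : 0 < F2).
  { apply Rlt_le_trans with (exp (- pc p * (INR (n + 1 + n) * ln 2)) * (hh n - 0)).
    apply Rmult_lt_0_compat; [apply exp_pos|lra]. apply cint_lb; [lra|]. intros x _.
    destruct (Hm x) as [_ H1]. assert (- pc p * (INR (n + 1 + n) * ln 2) <= - pc p * UU n x) by (apply Rmult_le_compat_neg_l; lra).
    destruct H as [H| ->]; [left; apply exp_increasing; auto|lra]. }
  assert (HI1 := I1_lb p n M HL1 (cont_expc (UU n) p HU) Hp Hn2 HM HMn Hc).
  assert (HI2 := I2_lb p n M HL2 (cont_expc (UU n) (- pc p) HU) Hp Hn2 HM Hc).
  fold F1 in HI1. fold F2 in HI2.
  assert (Ha := alpha_le p Hp). assert (Hb := beta_le p Hp). assert (Ht := th_bounds p Hp).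
  assert (Ha0 : 0 < th p * p) by nra. assert (Hb0 : 0 < th p * pc p) by nra.
  apply (alg_final (1/p) ((p-1)/p) (hh n) (INR M) (Hs M) F1 F2
     (sm (fun i => cst (th p * p) (S i) (hh n)) M) (sm (fun i => cst (th p * pc p) (S i) (hh n)) M)); auto.
  - split. apply Rdiv_lt_0_compat; lra. apply Rmult_lt_reg_r with p; [lra|]. field_simplify; lra.
  - field; lra.
  - apply Sg_ge; auto.
  - apply Sg_ge; auto.
  - destruct (ab_one p Hp) as [E|E]; [left|right]; rewrite E; apply S1_eq; auto.
Qed.

Lemma wp_eq p n t : (1 <= n)%nat -> wp p n t = exp (p * LL p n t).
Proof. intros Hn. unfold wp, Rpower. rewrite absF_eq, ln_exp by auto. reflexivity. Qed.

Lemma wdual_eq p n t : (1 <= n)%nat -> wdual p n t = exp (- pc p * LL p n t).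
Proof. intros Hn. unfold wdual, Rpower, pc. rewrite absF_eq, ln_exp by auto. reflexivity. Qed.

Lemma nat_above x : exists k : nat, x < INR k.
Proof.
  destruct (archimed (Rabs x)) as [H _].
  assert (Hx := Rabs_pos x). assert (Hle := RRle_abs x).
  assert (Hz : (0 <= up (Rabs x))%Z). { apply le_IZR. simpl. lra. }
  exists (Z.to_nat (up (Rabs x))). rewrite INR_IZR_INZ, Z2Nat.id by auto. lra.
Qed.

Lemma block_choice m : (22 <= m)%nat -> exists M : nat,
  (1 <= M)%nat /\ (M <= m)%nat /\ (INR M + 3) * hh m <= PI / 2 /\ 1 <= hh m * INR M
  /\ INR m <= 2 * INR M + 7.
Proof.
  intros Hm. assert (E := Nat.div_mod_eq m 2). assert (Hr := Nat.mod_upper_bound m 2 ltac:(lia)).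
  set (d := (m / 2)%nat) in *. set (r := (m mod 2)%nat) in *.
  exists (d - 3)%nat. assert (Hm1 : (1 <= m)%nat) by lia.
  assert (Hh := hh_NN m Hm1). assert (Hhp := hh_pos m Hm1). assert (HP := PI_gt3).
  unfold NN in Hh.
  assert (Hd : INR (d - 3) + 3 = INR d) by (rewrite minus_INR by lia; simpl; lra).
  assert (Em : INR m = 2 * INR d + INR r) by (rewrite E at 1; rewrite plus_INR, mult_INR; simpl; lra).
  assert (Hr' : INR r <= 1) by (assert (H := le_INR r 1 ltac:(lia)); simpl in H; lra).
  assert (Hr0 : 0 <= INR r) by apply pos_INR.
  assert (Hd11 : 11 <= INR d) by (assert (H := le_INR 11 d ltac:(lia)); simpl in H; lra).
  split; [lia|]. split; [lia|]. split; [|split].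
  - rewrite Hd. nra.
  - rewrite minus_INR by lia. simpl (INR 3). nra.
  - rewrite minus_INR by lia. simpl (INR 3). lra.
Qed.

Theorem mainTheorem3 (p : R) (hp1 : 1 < p) :
  (forall n : nat, (1 <= n)%nat -> inhabited (Riemann_integrable (wp p n) 0 PI)) /\
  (forall n : nat, (1 <= n)%nat -> inhabited (Riemann_integrable (wdual p n) 0 PI)) /\
  (forall (pr1 : forall n : nat, Riemann_integrable (wp p (S n)) 0 PI)
          (pr2 : forall n : nat, Riemann_integrable (wdual p (S n)) 0 PI),
     cv_infty (fun n : nat =>
       Rpower (/ PI * RiemannInt (pr1 n)) (1 / p) *
       Rpower (/ PI * RiemannInt (pr2 n)) ((p - 1) / p))).
Proof.
  assert (HP := PI_gt3).
  split; [|split].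
  - intros n Hn. constructor.
    exact (@Riemann_integrable_ext (fun t => exp (p * LL p n t)) (wp p n) 0 PI
      (fun t _ => eq_sym (wp_eq p n t Hn)) (cint_pr _ (cont_expc _ p (LL_cont p n Hn)) 0 PI (Rlt_le _ _ PI_RGT_0))).
  - intros n Hn. constructor.
    exact (@Riemann_integrable_ext (fun t => exp (- pc p * LL p n t)) (wdual p n) 0 PI
      (fun t _ => eq_sym (wdual_eq p n t Hn)) (cint_pr _ (cont_expc _ (- pc p) (LL_cont p n Hn)) 0 PI (Rlt_le _ _ PI_RGT_0))).
  - intros pr1 pr2 K.
    set (kap := Rmin (1 / p) ((p - 1) / p)).
    assert (Hkap : 0 < kap). { unfold kap. apply Rmin_case; apply Rdiv_lt_0_compat; lra. }
    assert (HC0 : 0 < C0). { unfold C0. assert (Hl2 := ln2_pos).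
      assert (0 < ln 4) by (rewrite <- ln_1; apply ln_increasing; lra).
      assert (0 < ln PI) by (rewrite <- ln_1; apply ln_increasing; lra). lra. }
    set (A := (ln (Rabs K + 1) + C0) / kap).
    assert (HA : 0 < A). { unfold A. apply Rdiv_lt_0_compat; auto.
      assert (0 <= ln (Rabs K + 1)). { rewrite <- ln_1. apply ln_mono; [lra|]. assert (H := Rabs_pos K); lra. }
      lra. }
    set (B := exp (exp A + ln 3)).
    destruct (nat_above B) as [Nb HNb].
    exists (2 * (Nb + 22))%nat. intros n Hn.
    assert (Hm22 : (22 <= (S n))%nat) by lia.
    destruct (block_choice (S n) Hm22) as [M [HM1 [HMm [Hc [HhM Hmm]]]]].
    assert (Hm1 : (1 <= (S n))%nat) by lia. assert (Hm2 : (2 <= (S n))%nat) by lia.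
    assert (HMB : B < INR M + 3).
    { assert (INR (2 * (Nb + 22)) <= INR n) by (apply le_INR; auto).
      rewrite mult_INR, plus_INR in H. simpl (INR 2) in H. simpl (INR 22) in H.
      assert (INR (S n) = INR n + 1) by (rewrite S_INR; auto). lra. }
    assert (HHs : exp A < Hs M).
    { assert (H := harm M). fold (Hs M) in H.
      assert (ln B < ln (INR M + 3)) by (apply ln_increasing; [apply exp_pos|auto]).
      unfold B in H0. rewrite ln_exp in H0. lra. }
    assert (HeA : 1 < exp A) by (rewrite <- exp_0; apply exp_increasing; auto).
    assert (HL1 := cont_expc _ p (LL_cont p (S n) Hm1)).
    assert (HL2 := cont_expc _ (- pc p) (LL_cont p (S n) Hm1)).
    assert (Hb := En_bound p (S n) M HL1 HL2 hp1 Hm2 HM1 HMm Hc HhM ltac:(lra)).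
    assert (E1 : RiemannInt (pr1 n) = cint _ HL1 0 PI).
    { rewrite <- (cint_eq _ HL1 0 PI (cint_pr _ HL1 0 PI ltac:(lra))) by lra.
      apply RiemannInt_P18; [lra|]. intros; apply wp_eq; auto. }
    assert (E2 : RiemannInt (pr2 n) = cint _ HL2 0 PI).
    { rewrite <- (cint_eq _ HL2 0 PI (cint_pr _ HL2 0 PI ltac:(lra))) by lra.
      apply RiemannInt_P18; [lra|]. intros; apply wdual_eq; auto. }
    cbv beta. rewrite E1, E2. unfold Rpower. rewrite <- exp_plus.
    fold kap in Hb.
    assert (HlnHs : A < ln (Hs M)).
    { rewrite <- (ln_exp A). apply ln_increasing; auto. apply exp_pos. }
    assert (ln (Rabs K + 1) < - C0 + kap * ln (Hs M)).
    { unfold A in HlnHs. apply Rmult_lt_compat_l with (r := kap) in HlnHs; auto.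
      replace (kap * ((ln (Rabs K + 1) + C0) / kap)) with (ln (Rabs K + 1) + C0) in HlnHs by (field; lra).
      lra. }
    apply Rlt_le_trans with (exp (ln (Rabs K + 1))).
    { rewrite exp_ln by (assert (H1 := Rabs_pos K); lra). assert (H1 := RRle_abs K). lra. }
    left; apply exp_increasing. rewrite (Rmult_comm (1 / p)), (Rmult_comm ((p - 1) / p)). lra.
Qed.
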